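(* Let $\Omega$, $d$ and $x_1^0,\dots,x_{m_1}^0$ be as in the context, let $v_M>0$ and $\epsilon>0$. Then there exists $t_\epsilon(v_M)>0$ such that for every $0<\tau_2\le t_\epsilon(v_M)$ there exists $l_\epsilon(\tau_2)>0$ with the following property: for all $1\le i\le m_1$ and all $(x,v)\in B(x_i^0,d)\times\overline{B(0,v_M)}$, if $X_s(x,v)\in\Omega_{l_\epsilon(\tau_2)}\cap B(x_i^0,d)$ for all $s\in[0,\tau_2]$, then $|V_s(x,v)-v|<\epsilon$ for all $s\in[0,t_\epsilon(v_M)]$.
   Context: $\Omega\subset\mathbb{R}^3$ is a connected bounded open set with $C^2$ boundary, $n$ the outward unit normal, $\Omega_\ell=\{x\in\Omega:d(x,\partial\Omega)<\ell\}$. There is $\delta(\Omega)>0$ such that for $0<d<\min\{1,\delta\}$ (fixed, also smaller than a uniform interior sphere radius $d_r$ of $\Omega$) there are $x_1^0,\dots,x_{m_1}^0\in\partial\Omega$ with $\partial\Omega\subset\bigcup_iB(x_i^0,d/8)$ and, for each $i$, an orthonormal basis $\{e_i^1,e_i^2,-n(x_i^0)\}$ and a $C^2$ function $\phi_i:\mathbb{R}^2\to\mathbb{R}$, $\phi_i(0)=0$, $\nabla\phi_i(0)=0$, $|\nabla\phi_i|<\frac1{100}$, such that in $B(x_i^0,3d)$ the boundary is the graph $\{x_i^0+u_1e_i^1+u_2e_i^2-\phi_i(u_1,u_2)n(x_i^0)\}$ and $\Omega$ the region $u_3>\phi_i$. $(X_s(x,v),V_s(x,v))$ denotes the position and velocity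 at time $s\ge0$ of the billiard (specular reflection) trajectory starting at $(x,v)$: it moves in straight lines with constant velocity in $\overline\Omega$ and, on hitting $\partial\Omega$ at a point $y$, the velocity $w$ is replaced by $w-2(w\cdot n(y))n(y)$ (trajectories with infinitely many rebounds in finite time or ending in grazing ''stop'' configurations form a null set). *)

(* Defs.v *)
From HB Require Import structures.
From mathcomp Require Import all_boot all_order all_algebra.
From mathcomp Require Import all_classical all_reals all_analysis.
Set Implicit Arguments. Unset Strict Implicit. Unset Printing Implicit Defensive.
Import Order.TTheory GRing.Theory Num.Theory.
Import numFieldNormedType.Exports.
Local Open Scope classical_set_scope.
Local Open Scope ring_scope.

Section Defs.
Variable R : realType.
Notation V3 := 'rV[R]_3.

Definition dot (u w : V3) : R := \sum_(k < 3) u 0 k * w 0 k.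
Definition enorm (u : V3) : R := Num.sqrt (dot u u).
Definition eball (c : V3) (r : R) : set V3 := [set y | enorm (y - c) < r].

Definition bdry (A : set V3) : set V3 := closure A `\` interior A.

(* Omega_l = { x in Omega : d(x, boundary) < l } *)
Definition layer (Om : set V3) (l : R) : set V3 :=
  [set x | Om x /\ exists y, bdry Om y /\ enorm (x - y) < l].

Definition bounded3 (Om : set V3) : Prop :=
  exists M : R, forall x, Om x -> enorm x <= M.

Definition chart_pt (x0 e1 e2 e3 : V3) (u1 u2 u3 : R) : V3 :=
  x0 + u1 *: e1 + u2 *: e2 + u3 *: e3.

Definition orthonormal3 (a b c : V3) : Prop :=
  [/\ dot a a = 1, dot b b = 1, dot c c = 1 &
      [/\ dot a b = 0, dot a c = 0 & dot b c = 0]].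

Definition pd1 (f : R -> R -> R) : R -> R -> R :=
  fun a b => derive1 (fun t => f t b) a.
Definition pd2 (f : R -> R -> R) : R -> R -> R :=
  fun a b => derive1 (fun t => f a t) b.
Definition partials_exist (f : R -> R -> R) : Prop :=
  forall a b, derivable (fun t => f t b) a 1 /\ derivable (fun t => f a t) b 1.
Definition jcont (f : R -> R -> R) : Prop :=
  continuous (fun p : R * R => f p.1 p.2).

Definition C2 (f : R -> R -> R) : Prop :=
  [/\ partials_exist f, partials_exist (pd1 f), partials_exist (pd2 f),
      jcont f & [/\ jcont (pd1 f), jcont (pd2 f), jcont (pd1 (pd1 f)),
      jcont (pd2 (pd1 f)) & jcont (pd1 (pd2 f)) /\ jcont (pd2 (pd2 f))]].

Definition C2_boundary (Om : set V3) : Prop :=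
  forall y, bdry Om y -> exists (r : R) (e1 e2 e3 : V3) (phi : R -> R -> R),
    [/\ 0 < r, orthonormal3 e1 e2 e3, C2 phi &
      forall z, eball y r z ->
        (Om z <-> exists u1 u2 u3, z = chart_pt y e1 e2 e3 u1 u2 u3 /\ phi u1 u2 < u3)].

(* n is the outward unit normal: unit, orthogonal to the boundary at y
   (tangency), and pointing out of Om *)
Definition outward_unit_normal (Om : set V3) (n : V3 -> V3) : Prop :=
  forall y, bdry Om y ->
    [/\ enorm (n y) = 1,
        (forall eps : R, 0 < eps -> exists r : R, 0 < r /\
           forall z, bdry Om z -> enorm (z - y) < r ->
             `|dot (z - y) (n y)| <= eps * enorm (z - y)) &
        (exists r : R, 0 < r /\ forall t : R, 0 < t < r -> Om (y - t *: n y))].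

Definition refl (w m : V3) : V3 := w - (2 * dot w m) *: m.

(* (X, Vs) is a billiard trajectory in Om starting at (x, v), defined for all
   times s >= 0, with finitely many rebounds (set T) in each bounded time
   interval; Vs is right-continuous (post-collision velocity at a rebound). *)
Definition billiard (Om : set V3) (n : V3 -> V3) (x v : V3)
    (X Vs : R -> V3) : Prop :=
  exists T : set R,
    [/\ T `<=` [set t | 0 < t],
        (forall M : R, finite_set (T `&` [set t | 0 <= t <= M])),
        X 0 = x, Vs 0 = v &
    [/\ (forall s, 0 <= s -> closure Om (X s)),
        (forall s1 s2, 0 <= s1 <= s2 -> (forall t, s1 < t < s2 -> ~ T t) ->
           X s2 = X s1 + (s2 - s1) *: Vs s1 /\
           (forall s, s1 <= s < s2 -> Vs s = Vs s1)) &
        (forall t, T t -> bdry Om (X t) /\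
           exists s, [/\ 0 <= s < t, (forall u, s < u < t -> ~ T u) &
                       Vs t = refl (Vs s) (n (X t))])]].

End Defs.

(* Main.v *)
Require Import Defs.
From HB Require Import structures.
From mathcomp Require Import all_boot all_order all_algebra.
From mathcomp Require Import all_classical all_reals all_analysis.
From mathcomp Require Import ring lra.
Set Implicit Arguments. Unset Strict Implicit. Unset Printing Implicit Defensive.
Import Order.TTheory GRing.Theory Num.Theory.
Import numFieldNormedType.Exports.
Local Open Scope classical_set_scope.
Local Open Scope ring_scope.


Lemma cont_box_bound (R : realType) (h : R -> R -> R) (B : R) : jcont h ->
  exists M, 0 < M /\ forall a b, -B <= a <= B -> -B <= b <= B -> `|h a b| <= M.
Proof.
move=> hc.
pose A : set (R * R) := `[-B, B]%classic `*` `[-B, B]%classic.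
have cA : compact A by apply: compact_setX; apply: segment_compact.
have := continuous_compact (continuous_subspaceT hc) cA.
move=> /compact_bounded /ex_strict_bound_gt0 [M M0 HM].
exists M; split => // a b ha hb.
apply: ltW; apply: (HM (h a b)); exists (a, b) => //.
Qed.
Lemma mvt_all (R : realType) (f : R -> R) : (forall t, derivable f t 1) ->
  forall a b, exists c, (a <= c <= b \/ b <= c <= a) /\ f b - f a = derive1 f c * (b - a).
Proof.
move=> fd.
have H : forall a b, a <= b -> exists c, a <= c <= b /\ f b - f a = derive1 f c * (b - a).
  move=> a b ab.
  have [c cab E] := @MVT_segment R f (derive1 f) a b ab
    (fun x _ => ltac:(rewrite derive1E; exact: derivableP))
    (derivable_within_continuous (fun x _ => fd x)).
  by exists c; split => //; move: cab; rewrite in_itv.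
move=> a b; case: (lerP a b) => ab.
  by have [c [? ?]] := H a b ab; exists c; split => //; left.
have [c [? E]] := H b a (ltW ab); exists c; split; first by right.
by rewrite -opprB E -mulrN opprB.
Qed.
Section LA.
Variable R : realType.
Notation V3 := 'rV[R]_3.

Lemma dotE (u w : V3) : dot u w = u 0 0 * w 0 0 + u 0 1 * w 0 1 + u 0 2%:R * w 0 2%:R.
Proof.
rewrite /dot !big_ord_recr big_ord0 /= add0r.
by congr (_ + _ + _); congr (_ * _); congr (fun_of_matrix _ _ _); apply: val_inj.
Qed.

Lemma dotC (u w : V3) : dot u w = dot w u.
Proof. rewrite !dotE; ring. Qed.
Lemma dotDl (u u' w : V3) : dot (u + u') w = dot u w + dot u' w.
Proof. rewrite !dotE !mxE; ring. Qed.
Lemma dotBl (u u' w : V3) : dot (u - u') w = dot u w - dot u' w.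
Proof. rewrite !dotE !mxE; ring. Qed.
Lemma dotZl (a : R) (u w : V3) : dot (a *: u) w = a * dot u w.
Proof. rewrite !dotE !mxE; ring. Qed.

Lemma span3 (a b c : V3) : orthonormal3 a b c ->
  forall u : V3, u = dot u a *: a + dot u b *: b + dot u c *: c.
Proof.
move=> [haa hbb hcc [hab hac hbc]] u.
pose e (i : 'I_3) : V3 := if val i == 0%N then a else if val i == 1%N then b else c.
pose M : 'M[R]_3 := \matrix_(i, j) e i 0 j.
have MM : M *m M^T = 1%:M.
  apply/matrixP => i k; rewrite !mxE.
  have -> : \sum_j M i j * M^T j k = dot (e i) (e k).
    by apply: eq_bigr => j _; rewrite !mxE.
  case: i => [[|[|[|?]]] ?] //=; case: k => [[|[|[|?]]] ?] //=;
    rewrite /e /= ?haa ?hbb ?hcc ?hab ?hac ?hbc // dotC ?hab ?hac ?hbc //.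
have MM' := mulmx1C MM.
have re : forall i, row i M = e i.
  by move=> i; apply/rowP => j; rewrite !mxE; have -> : (0 : 'I_1) = ord0 by apply: val_inj.
have ce : forall i, (u *m M^T) 0 i = dot u (e i).
  by move=> i; rewrite !mxE; apply: eq_bigr => j _; rewrite !mxE.
have -> : dot u a *: a + dot u b *: b + dot u c *: c = (u *m M^T) *m M.
  by rewrite mulmx_sum_row !big_ord_recr big_ord0 /= add0r !re !ce /e /=.
by rewrite -mulmxA MM' mulmx1.
Qed.

Lemma parseval (a b c : V3) : orthonormal3 a b c -> forall u w : V3,
  dot u w = dot u a * dot w a + dot u b * dot w b + dot u c * dot w c.
Proof.
move=> hON u w; rewrite {1}(span3 hON u) !dotDl !dotZl.
by rewrite (dotC a) (dotC b) (dotC c).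
Qed.

Lemma sqrt_lt (X r : R) : 0 <= X -> 0 < r -> X < r ^+ 2 -> Num.sqrt X < r.
Proof.
move=> X0 r0 Xr; have s0 := sqrtr_ge0 X; have s2 := sqr_sqrtr X0.
set s := Num.sqrt X in s0 s2 *; nra.
Qed.
Lemma sqrt_lt_inv (X r : R) : 0 <= X -> Num.sqrt X < r -> X < r ^+ 2.
Proof.
move=> X0 Xr; have s0 := sqrtr_ge0 X; have s2 := sqr_sqrtr X0.
set s := Num.sqrt X in s0 s2 Xr *; nra.
Qed.
Lemma sqrt_le_inv (X r : R) : 0 <= X -> Num.sqrt X <= r -> X <= r ^+ 2.
Proof.
move=> X0 Xr; have s0 := sqrtr_ge0 X; have s2 := sqr_sqrtr X0.
set s := Num.sqrt X in s0 s2 Xr *; nra.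
Qed.
Lemma sq_ge0_3 (a b c : R) : 0 <= a ^+ 2 + b ^+ 2 + c ^+ 2.
Proof. nra. Qed.
Lemma abs_le_of_sq (a r : R) : 0 <= r -> a ^+ 2 <= r ^+ 2 -> `|a| <= r.
Proof. move=> r0 h; case: (lerP 0 a) => ha; [rewrite ger0_norm // | rewrite ltr0_norm //]; nra. Qed.
Lemma abs_lt_of_sq (a r : R) : 0 < r -> a ^+ 2 < r ^+ 2 -> `|a| < r.
Proof. move=> r0 h; case: (lerP 0 a) => ha; [rewrite ger0_norm // | rewrite ltr0_norm //]; nra. Qed.
End LA.

Section Lip.
Variable R : realType.

Lemma between_box (a b c B : R) : (a <= c <= b \/ b <= c <= a) ->
  `|a| <= B -> `|b| <= B -> `|c| <= B.
Proof.
rewrite !ler_norml => h /andP[? ?] /andP[? ?]; apply/andP.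
case: h => /andP[? ?]; split; lra.
Qed.

Lemma lip1 (g : R -> R -> R) (B M1 M2 : R) : partials_exist g ->
  (forall a b, `|a| <= B -> `|b| <= B -> `|pd1 g a b| <= M1 /\ `|pd2 g a b| <= M2) ->
  forall a b a' b', `|a| <= B -> `|b| <= B -> `|a'| <= B -> `|b'| <= B ->
  `|g a b - g a' b'| <= M1 * `|a - a'| + M2 * `|b - b'|.
Proof.
move=> gd gb a b a' b' ha hb ha' hb'.
have [c [hc Ec]] := mvt_all (fun t => (gd t b).1) a' a.
have [e [he Ee]] := mvt_all (fun t => (gd a' t).2) b' b.
have -> : g a b - g a' b' = (g a b - g a' b) + (g a' b - g a' b') by ring.
rewrite Ec Ee.
have hc' := between_box hc ha' ha; have he' := between_box he hb' hb.
have [h1 _] := gb c b hc' hb; have [_ h2] := gb a' e ha' he'.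
rewrite /pd1 /pd2 in h1 h2.
apply: (le_trans (ler_normD _ _)); rewrite !normrM.
apply: lerD; apply: ler_wpM2r => //.
Qed.

Lemma C2_lip (f : R -> R -> R) (B : R) : C2 f -> exists Lg, 0 < Lg /\
  forall a b a' b', `|a| <= B -> `|b| <= B -> `|a'| <= B -> `|b'| <= B ->
  `|pd1 f a b - pd1 f a' b'| <= Lg * (`|a - a'| + `|b - b'|) /\
  `|pd2 f a b - pd2 f a' b'| <= Lg * (`|a - a'| + `|b - b'|).
Proof.
move=> [_ d1 d2 _ [_ _ c11 c21 [c12 c22]]].
have [M1 [M10 hM1]] := cont_box_bound B c11.
have [M2 [M20 hM2]] := cont_box_bound B c21.
have [M3 [M30 hM3]] := cont_box_bound B c12.
have [M4 [M40 hM4]] := cont_box_bound B c22.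
exists (M1 + M2 + M3 + M4); split; first lra.
move=> a b a' b' ha hb ha' hb'.
have bx : forall u, `|u| <= B -> -B <= u <= B by move=> u; rewrite ler_norml.
have L1 := @lip1 (pd1 f) B M1 M2 d1 (fun a b ha hb => conj (hM1 a b (bx a ha) (bx b hb)) (hM2 a b (bx a ha) (bx b hb))) a b a' b' ha hb ha' hb'.
have L2 := @lip1 (pd2 f) B M3 M4 d2 (fun a b ha hb => conj (hM3 a b (bx a ha) (bx b hb)) (hM4 a b (bx a ha) (bx b hb))) a b a' b' ha hb ha' hb'.
have n1 := normr_ge0 (a - a'); have n2 := normr_ge0 (b - b').
split; [apply: (le_trans L1) | apply: (le_trans L2)]; nra.
Qed.
End Lip.

Section Bill.
Variable R : realType.
Notation V3 := 'rV[R]_3.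

Definition bT (Om : set V3) (n : V3 -> V3) (x v : V3) (X Vs : R -> V3) (T : set R) :=
    [/\ T `<=` [set t | 0 < t],
        (forall M : R, finite_set (T `&` [set t | 0 <= t <= M])),
        X 0 = x, Vs 0 = v &
    [/\ (forall s, 0 <= s -> closure Om (X s)),
        (forall s1 s2, 0 <= s1 <= s2 -> (forall t, s1 < t < s2 -> ~ T t) ->
           X s2 = X s1 + (s2 - s1) *: Vs s1 /\
           (forall s, s1 <= s < s2 -> Vs s = Vs s1)) &
        (forall t, T t -> bdry Om (X t) /\
           exists s, [/\ 0 <= s < t, (forall u, s < u < t -> ~ T u) &
                       Vs t = refl (Vs s) (n (X t))])]].

Lemma billiardE Om n x v X Vs : billiard Om n x v X Vs -> exists T, bT Om n x v X Vs T.
Proof. by []. Qed.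

Lemma seq_min (l : seq R) (P : R -> Prop) : (exists t, t \in l /\ P t) ->
  exists t, [/\ t \in l, P t & forall u, u \in l -> P u -> t <= u].
Proof.
elim: l => [[t [] //]|x l IH [t [tl Pt]]].
case: (pselect (exists t, t \in l /\ P t)) => [/IH [m [ml Pm mmin]]|nex].
  case: (pselect (P x)) => Px.
    case: (lerP x m) => xm.
      exists x; split => //; first by rewrite inE eqxx.
      move=> u; rewrite inE => /orP [/eqP -> //| ul Pu]; exact: le_trans xm (mmin _ ul Pu).
    exists m; split => //; first by rewrite inE ml orbT.
    move=> u; rewrite inE => /orP [/eqP -> //| ul Pu]; [move=> _; exact: ltW | exact: mmin].
  exists m; split => //; first by rewrite inE ml orbT.
  by move=> u; rewrite inE => /orP [/eqP -> //| ul Pu]; exact: mmin.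
have Px : P x.
  move: tl; rewrite inE => /orP [/eqP <- //| tl]; by exfalso; apply: nex; exists t.
exists x; split => //; first by rewrite inE eqxx.
move=> u; rewrite inE => /orP [/eqP -> //| ul Pu]; by exfalso; apply: nex; exists u.
Qed.

Lemma count_lt (l : seq R) (a b : R) : a < b -> b \in l ->
  (count (fun t : R => (b < t)%R) l < count (fun t : R => (a < t)%R) l)%N.
Proof.
move=> ab; elim: l => // x l IH; rewrite inE => /orP [/eqP <- | bl] /=.
  rewrite ltxx ab add0n add1n ltnS; apply: sub_count => t /= bt; exact: lt_trans ab bt.
have := IH bl; case: (ltrP b x) => bx; case: (ltrP a x) => ax //=.
- move=> _; exfalso; have := lt_trans ab bx; rewrite ltNge ax //.
- by rewrite !add0n => /ltnW; rewrite -ltnS.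
Qed.

Variables (Om : set V3) (n : V3 -> V3) (x v : V3) (X Vs : R -> V3) (T : set R).
Hypothesis hb : bT Om n x v X Vs T.

Lemma seg s1 s2 : 0 <= s1 <= s2 -> (forall t, s1 < t < s2 -> ~ T t) ->
  X s2 = X s1 + (s2 - s1) *: Vs s1.
Proof. by case: hb => _ _ _ _ [_ H _] h1 h2; case: (H s1 s2 h1 h2). Qed.

Lemma segV s1 s2 s : 0 <= s1 -> s1 <= s < s2 -> (forall t, s1 < t < s2 -> ~ T t) ->
  Vs s = Vs s1.
Proof.
case: hb => _ _ _ _ [_ H _] h0 /andP [h1 h2] h3.
have h12 : 0 <= s1 <= s2 by apply/andP; split => //; apply: ltW; apply: le_lt_trans h1 h2.
by case: (H s1 s2 h12 h3) => _; apply; apply/andP.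
Qed.

Lemma refl_at a t1 : 0 <= a < t1 -> T t1 -> (forall u, a < u < t1 -> ~ T u) ->
  Vs t1 = refl (Vs a) (n (X t1)) /\ bdry Om (X t1).
Proof.
move=> /andP [a0 at1] Tt1 noT.
case: hb => _ _ _ _ [_ _ H]; have [bd [s [/andP [s0 st1] noT' E]]] := H t1 Tt1.
split => //; rewrite E; congr refl.
case: (lerP s a) => sa.
  by symmetry; apply: (segV (s2 := t1)) => //; apply/andP.
by apply: (segV (s2 := t1)) => //; apply/andP; split => //; apply: ltW.
Qed.

Lemma rebound_list M : exists l : seq R, forall t, (T t /\ 0 <= t <= M) <-> t \in l.
Proof.
case: hb => _ fin _ _ _; have [l E] := (finite_seqP _).1 (fin M).
exists l => t; split.
  by move=> h; have : (T `&` [set t | 0 <= t <= M]) t by []; rewrite E.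
by move=> tl; have : [set` l] t by []; rewrite -E.
Qed.

Lemma first_rebound a b : 0 <= a <= b ->
  (forall t, a < t <= b -> ~ T t) \/
  exists t1, [/\ a < t1 <= b, T t1 & forall u, a < u < t1 -> ~ T u].
Proof.
move=> /andP [a0 ab]; have [l hl] := rebound_list b.
case: (pselect (exists t, t \in l /\ a < t)) => [ex|nex].
  have [t1 [t1l at1 t1min]] := seq_min ex.
  have [Tt1 /andP [_ t1b]] := (hl t1).2 t1l.
  right; exists t1; split => //; first by apply/andP.
  move=> u /andP [au ut1] Tu.
  have ul : u \in l.
    apply/(hl u).1; split => //; apply/andP; split.
      by apply: ltW; apply: le_lt_trans a0 au.
    by apply: ltW; apply: lt_le_trans ut1 t1b.
  by have := t1min u ul au; rewrite leNgt ut1.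
left => t /andP [hat tb] Tt; apply: nex; exists t; split => //.
apply/(hl t).1; split => //; apply/andP; split => //.
by apply: ltW; apply: le_lt_trans a0 hat.
Qed.

Lemma billiard_induct (M : R) (Q : R -> V3 -> V3 -> Prop) : 0 <= M ->
  Q 0 x v ->
  (forall s1 s z w, 0 <= s1 <= s -> s <= M -> Q s1 z w -> Q s (z + (s - s1) *: w) w) ->
  (forall s z w, 0 < s <= M -> bdry Om z -> Q s z w -> Q s z (refl w (n z))) ->
  forall s, 0 <= s <= M -> Q s (X s) (Vs s).
Proof.
move=> M0 Q0 Qfree Qrefl.
have [l hl] := rebound_list (M + 1).
suff main : forall k a, count (fun t => a < t) l = k -> 0 <= a <= M ->
  Q a (X a) (Vs a) -> forall s, a <= s <= M -> Q s (X s) (Vs s).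
  move=> s /andP [s0 sM]; apply: (main _ 0 erefl) => //; try by apply/andP.
  case: hb => _ _ -> -> _ //.
elim/ltn_ind => k IH a ck /andP [a0 aM] Qa s /andP [hs sM].
have freeQ : forall b s, a <= s < b -> (forall t, a < t < b -> ~ T t) ->
    Q s (X s) (Vs s) \/ M < s.
  move=> b s' /andP [hs1 s'b] noT; case: (lerP s' M) => s'M; last by right.
  left; rewrite (segV (s1 := a) (s2 := b)) //; last by apply/andP.
  rewrite (seg (s1 := a) (s2 := s')); last first.
    by move=> t /andP [hat tsp]; apply: noT; apply/andP; split => //; apply: lt_trans tsp s'b.
    by apply/andP.
  by apply: Qfree => //; apply/andP.
have aM1 : 0 <= a <= M + 1 by apply/andP; split => //; lra.
case: (first_rebound aM1) => [none|[t1 [/andP [at1 t1M] Tt1 noT]]].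
  have := freeQ (M + 1) s; case => //.
  - by apply/andP; split => //; lra.
  - by move=> t /andP [hat tM]; apply: none; apply/andP; split => //; apply: ltW.
  - by move=> h; exfalso; move: h; rewrite ltNge sM.
case: (ltrP s t1) => st1.
  have := freeQ t1 s; case => //.
  - by apply/andP.
  - by move=> h; exfalso; move: h; rewrite ltNge sM.
have t1M' : t1 <= M by apply: le_trans st1 sM.
have a0' : 0 <= a < t1 by apply/andP.
have [Vt1 bd] := refl_at a0' Tt1 noT.
have Qt1 : Q t1 (X t1) (Vs t1).
  rewrite Vt1; apply: Qrefl => //.
    by apply/andP; split => //; apply: le_lt_trans a0 at1.
  rewrite (seg (s1 := a) (s2 := t1)) //; last by apply/andP; split => //; apply: ltW.
  by apply: Qfree => //; apply/andP; split => //; apply: ltW.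
have t1l : t1 \in l.
  apply/(hl t1).1; split => //; apply/andP; split => //.
  by apply: ltW; apply: le_lt_trans a0 at1.
have cl := count_lt at1 t1l; rewrite ck in cl.
apply: (IH _ cl t1 erefl) => //; apply/andP => //; split => //.
by apply: ltW; apply: le_lt_trans a0 at1.
Qed.
End Bill.


Section Arith.
Variable R : realType.

Lemma abs_case (u : R) : (0 <= u /\ `|u| = u) \/ (u < 0 /\ `|u| = - u).
Proof. by case: (lerP 0 u) => h; [left; rewrite ger0_norm | right; rewrite ltr0_norm]. Qed.

Lemma sq_le_abs (q t : R) : `|q| <= t -> q ^+ 2 <= t ^+ 2.
Proof. by case: (abs_case q) => [[h ->]|[h ->]] => ?; nra. Qed.

Lemma sq_shift (u q D : R) : 0 <= D -> `|u| <= 2 * D -> `|q| <= D / 10 -> (u + q) ^+ 2 <= u ^+ 2 + D ^+ 2 / 2.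
Proof. by move=> D0; case: (abs_case u) => [[h ->]|[h ->]]; case: (abs_case q) => [[h' ->]|[h' ->]] => ? ?; nra. Qed.

Lemma between_dist (a c q : R) : (a <= c <= a + q \/ a + q <= c <= a) -> `|c - a| <= `|q|.
Proof.
move=> hc; case: (abs_case q) => [[q0 ->]|[q0 ->]]; rewrite ler_norml;
case: hc => /andP [? ?]; apply/andP; split; lra.
Qed.

Lemma taylor_arith (D1 D2 q1 q2 Lg c a e b : R) : 0 < Lg ->
  `|c - a| <= `|q1| -> `|e - b| <= `|q2| ->
  `|D1| <= Lg * (`|c - a| + `|b + q2 - b|) -> `|D2| <= Lg * (`|a - a| + `|e - b|) ->
  `|D1 * q1 + D2 * q2| <= Lg * (`|q1| + `|q2|) ^+ 2.
Proof.
move=> Lg0 h1 h2 L1 L2; rewrite subrr normr0 add0r in L2.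
rewrite (_ : b + q2 - b = q2) in L1; last by ring.
apply: (le_trans (ler_normD _ _)); rewrite !normrM.
have n1 := normr_ge0 q1; have n2 := normr_ge0 q2.
have n3 := normr_ge0 D1; have n4 := normr_ge0 D2.
have L1' : `|D1| <= Lg * (`|q1| + `|q2|) by apply: (le_trans L1); apply: ler_wpM2l; [exact: ltW | lra].
have L2' : `|D2| <= Lg * (`|q1| + `|q2|) by apply: (le_trans L2); apply: ler_wpM2l; [exact: ltW | lra].
nra.
Qed.

Lemma seg_arith (t vM Lg W1 W2 W3 dG1 dG2 T : R) : 0 <= t -> 0 < Lg ->
  `|W1| <= vM -> `|W2| <= vM -> `|W3| <= vM ->
  `|dG1| <= Lg * (t * `|W1| + t * `|W2|) -> `|dG2| <= Lg * (t * `|W1| + t * `|W2|) ->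
  T <= Lg * (`|t * W1| + `|t * W2|) ^+ 2 ->
  [/\ T <= 4 * Lg * vM ^+ 2 * t ^+ 2,
      `|- (dG1 * W1) - dG2 * W2| <= 4 * Lg * vM ^+ 2 * t,
      `|dG1 * W3| <= 2 * Lg * vM ^+ 2 * t &
      `|dG2 * W3| <= 2 * Lg * vM ^+ 2 * t].
Proof.
move=> t0 Lg0 h1 h2 h3 L1 L2 HT.
have vM0 : 0 <= vM by apply: le_trans (normr_ge0 _) h1.
have s0 : 0 <= t * `|W1| + t * `|W2| by have := normr_ge0 W1; have := normr_ge0 W2; nra.
have s1 : t * `|W1| + t * `|W2| <= 2 * vM * t by nra.
have E1 : Lg * (t * `|W1| + t * `|W2|) <= 2 * Lg * vM * t by nra.
have dG1b : `|dG1| <= 2 * Lg * vM * t by apply: le_trans L1 E1.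
have dG2b : `|dG2| <= 2 * Lg * vM * t by apply: le_trans L2 E1.
have hW3 := normr_ge0 W3; have hW1 := normr_ge0 W1; have hW2 := normr_ge0 W2.
have nG1 := normr_ge0 dG1; have nG2 := normr_ge0 dG2.
split.
- rewrite !normrM (ger0_norm t0) in HT.
  have : (t * `|W1| + t * `|W2|) ^+ 2 <= (2 * vM * t) ^+ 2 by nra.
  nra.
- rewrite -opprD normrN; apply: (le_trans (ler_normD _ _)); rewrite !normrM; nra.
- rewrite normrM; nra.
- rewrite normrM; nra.
Qed.

Lemma ball_arith (u1 u2 u3 q1 q2 D d : R) : 0 < d ->
  u1 ^+ 2 + u2 ^+ 2 + u3 ^+ 2 < (2 * d) ^+ 2 ->
  `|q1| <= d / 10 -> `|q2| <= d / 10 -> `|D| <= d / 10 ->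
  (u1 + q1) ^+ 2 + (u2 + q2) ^+ 2 + (u3 + D) ^+ 2 < (3 * d) ^+ 2.
Proof.
move=> d0 hu hq1 hq2 hD.
have a1 : `|u1| <= 2 * d by apply: ltW; apply: abs_lt_of_sq; nra.
have a2 : `|u2| <= 2 * d by apply: ltW; apply: abs_lt_of_sq; nra.
have a3 : `|u3| <= 2 * d by apply: ltW; apply: abs_lt_of_sq; nra.
have s1 := sq_shift (ltW d0) a1 hq1.
have s2 := sq_shift (ltW d0) a2 hq2.
have s3 := sq_shift (ltW d0) a3 hD.
nra.
Qed.

Lemma tangent_arith (a b t e Lg N1 N2 N3 D g1 g2 : R) : 0 < t -> 0 < e -> 0 < Lg ->
  `|N3| <= 1 -> 4 * Lg * t <= e ->
  `|t * a * N1 + t * b * N2 + D * N3| <= e * (2 * t) ->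
  `|D - (g1 * (t * a) + g2 * (t * b))| <= 4 * Lg * t ^+ 2 ->
  `|a * N1 + b * N2 + (a * g1 + b * g2) * N3| <= 3 * e.
Proof.
move=> t0 e0 Lg0 hN3 te h1 h2.
set E := a * N1 + b * N2 + (a * g1 + b * g2) * N3.
have Eq : t * E = (t * a * N1 + t * b * N2 + D * N3) - (D - (g1 * (t * a) + g2 * (t * b))) * N3.
  by rewrite /E; ring.
have h3 : `|t * E| <= e * (2 * t) + 4 * Lg * t ^+ 2.
  rewrite Eq; apply: (le_trans (ler_normB _ _)).
  apply: lerD => //; rewrite normrM.
  have := normr_ge0 (D - (g1 * (t * a) + g2 * (t * b))); have := normr_ge0 N3; nra.
rewrite normrM (gtr0_norm t0) in h3.
have : t * `|E| <= t * (3 * e) by nra.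
by rewrite ler_pM2l.
Qed.

Lemma small_zero (E : R) : (forall e, 0 < e -> `|E| <= 3 * e) -> E = 0.
Proof.
move=> key; apply/normr0_eq0/eqP; rewrite eq_le normr_ge0 andbT; apply/negP => /negP; rewrite -ltNge => E0.
have := key (`|E| / 6) ltac:(by apply: divr_gt0); lra.
Qed.

Lemma min3 (r d e : R) : 0 < r -> 0 < d -> 0 < e ->
  exists t, [/\ 0 < t, t <= r, t <= d & t <= e].
Proof.
move=> r0 d0 e0; exists (Num.min (Num.min r d) e).
have := lexx (Num.min (Num.min r d) e).
rewrite {2}/Num.min !le_min => /andP [/andP [-> ->] ->]; split => //.
by rewrite !lt_min r0 d0 e0.
Qed.

Lemma abs_mul_le (t a : R) : 0 < t -> `|a| <= 1 -> `|t * a| <= t.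
Proof. by move=> t0 ha; rewrite normrM (gtr0_norm t0); nra. Qed.

Lemma nz_arith (q1 q2 D t : R) : 0 < t -> `|q1| <= t -> `|q2| <= t -> `|D| <= t / 50 ->
  q1 ^+ 2 + q2 ^+ 2 + D ^+ 2 < (2 * t) ^+ 2.
Proof.
move=> t0 h1 h2 h3; have := sq_le_abs h1; have := sq_le_abs h2; have := sq_le_abs h3; nra.
Qed.

Lemma sum_abs_sq (q1 q2 t : R) : 0 < t -> `|q1| <= t -> `|q2| <= t -> (`|q1| + `|q2|) ^+ 2 <= (2 * t) ^+ 2.
Proof.
move=> t0 h1 h2; apply: sq_le_abs; rewrite ger0_norm; [lra | apply: addr_ge0; exact: normr_ge0].
Qed.


Lemma pos3 (d : R) : 0 < d -> 0 < 3 * d. Proof. move=> ?; lra. Qed.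
Lemma sq23 (x d : R) : 0 < d -> x < (2 * d) ^+ 2 -> x < (3 * d) ^+ 2.
Proof. move=> ? ?; nra. Qed.
Lemma sp1_le (N1 N2 N3 : R) : N1 ^+ 2 + N2 ^+ 2 + N3 ^+ 2 = 1 -> `|N3| <= 1.
Proof. move=> h; apply: abs_le_of_sq => //; nra. Qed.
Lemma coords_arith (u1 u2 u3 q1 q2 d t : R) : 0 < d ->
  u1 ^+ 2 + u2 ^+ 2 + u3 ^+ 2 < (2 * d) ^+ 2 -> `|q1| <= t -> `|q2| <= t -> t <= d / 10 ->
  [/\ `|u1| <= 3 * d, `|u2| <= 3 * d, `|u1 + q1| <= 3 * d & `|u2 + q2| <= 3 * d].
Proof.
move=> d0 hu h1 h2 td.
have a1 : `|u1| <= 2 * d by apply: ltW; apply: abs_lt_of_sq; nra.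
have a2 : `|u2| <= 2 * d by apply: ltW; apply: abs_lt_of_sq; nra.
split; try lra; apply: (le_trans (ler_normD _ _)); lra.
Qed.
Lemma flip_arith (D u1 u2 q1 q2 t : R) :
  `|D| <= 1 / 100 * `|u1 + q1 - u1| + 1 / 100 * `|u2 + q2 - u2| -> `|q1| <= t -> `|q2| <= t ->
  `|D| <= t / 50.
Proof. have ee : forall a b : R, a + b - a = b by move=> a b; ring.
rewrite !ee => ? ? ?; lra. Qed.
Lemma lg_sq (X Lg S t : R) : 0 < Lg -> X <= Lg * S -> S <= (2 * t) ^+ 2 -> X <= 4 * Lg * t ^+ 2.
Proof. move=> ? h1 h2; nra. Qed.
Lemma D_small (D t d : R) : `|D| <= t / 50 -> t <= d / 10 -> 0 < t -> `|D| <= d / 10.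
Proof. move=> ? ? ?; lra. Qed.
Lemma pos_div (a b : R) : 0 < a -> 0 < b -> 0 < a / b.
Proof. exact: divr_gt0. Qed.
Lemma pos4 (a : R) : 0 < a -> 0 < 4 * a. Proof. move=> ?; lra. Qed.
Lemma pos2 (a : R) : 0 < a -> 0 < 2 * a. Proof. move=> ?; lra. Qed.
Lemma lt_le2 (x t r : R) : x < 2 * t -> t <= r / 2 -> x < r. Proof. move=> ? ?; lra. Qed.
Lemma htg_arith (X e y t : R) : 0 < e -> X <= e * y -> y < 2 * t -> X <= e * (2 * t).
Proof. move=> ? ? ?; nra. Qed.
Lemma te_arith (t e Lg : R) : 0 < Lg -> t <= e / (4 * Lg) -> 4 * Lg * t <= e.
Proof. by move=> ?; rewrite ler_pdivlMr; [lra | lra]. Qed.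
Lemma eq_sub0 (a b : R) : a - b = 0 -> a = b.
Proof. by move/eqP; rewrite subr_eq0 => /eqP. Qed.
Lemma refl_alg (W1 W2 W3 N1 N2 N3 g1 g2 : R) : N1 + g1 * N3 = 0 -> N2 + g2 * N3 = 0 ->
  N1 ^+ 2 + N2 ^+ 2 + N3 ^+ 2 = 1 ->
  let s := W1 * N1 + W2 * N2 + W3 * N3 in
  let r1 := W1 - 2 * s * N1 in let r2 := W2 - 2 * s * N2 in let r3 := W3 - 2 * s * N3 in
  [/\ r1 + g1 * r3 = W1 + g1 * W3, r2 + g2 * r3 = W2 + g2 * W3,
      r3 - g1 * r1 - g2 * r2 = - (W3 - g1 * W1 - g2 * W2) &
      r1 ^+ 2 + r2 ^+ 2 + r3 ^+ 2 = W1 ^+ 2 + W2 ^+ 2 + W3 ^+ 2].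
Proof.
move=> h1 h2 hN s r1 r2 r3.
have e1 : N1 = - (g1 * N3) by apply/eqP; rewrite -subr_eq0 opprK h1.
have e2 : N2 = - (g2 * N3) by apply/eqP; rewrite -subr_eq0 opprK h2.
have z : forall x y : R, x - y = 0 -> x = y by move=> x y /eqP; rewrite subr_eq0 => /eqP.
split; apply: z.
- have -> : r1 + g1 * r3 - (W1 + g1 * W3) = - 2 * s * (N1 + g1 * N3) by rewrite /r1 /r3; ring.
  by rewrite h1 mulr0.
- have -> : r2 + g2 * r3 - (W2 + g2 * W3) = - 2 * s * (N2 + g2 * N3) by rewrite /r2 /r3; ring.
  by rewrite h2 mulr0.
- have -> : r3 - g1 * r1 - g2 * r2 - - (W3 - g1 * W1 - g2 * W2) =
     2 * (W3 - g1 * W1 - g2 * W2) * (1 - (N1 ^+ 2 + N2 ^+ 2 + N3 ^+ 2)).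
    by rewrite /r1 /r2 /r3 /s e1 e2; ring.
  by rewrite hN subrr mulr0.
- have -> : r1 ^+ 2 + r2 ^+ 2 + r3 ^+ 2 - (W1 ^+ 2 + W2 ^+ 2 + W3 ^+ 2) =
     4 * s ^+ 2 * (N1 ^+ 2 + N2 ^+ 2 + N3 ^+ 2 - 1).
    by rewrite /r1 /r2 /r3 /s; ring.
  by rewrite hN subrr mulr0.
Qed.

Lemma sp_coords (a b c M : R) : 0 <= M -> a ^+ 2 + b ^+ 2 + c ^+ 2 <= M ^+ 2 ->
  [/\ `|a| <= M, `|b| <= M & `|c| <= M].
Proof. by move=> M0 h; split; apply: abs_le_of_sq => //; nra. Qed.

Lemma ball_box (a b c r : R) : 0 < r -> a ^+ 2 + b ^+ 2 + c ^+ 2 < r ^+ 2 ->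
  [/\ `|a| <= r, `|b| <= r & `|c| <= r].
Proof. by move=> r0 h; split; apply: ltW; apply: abs_lt_of_sq => //; nra. Qed.

Lemma sq_1_2 (X d : R) : 0 < d -> X < d ^+ 2 -> X < (2 * d) ^+ 2.
Proof. move=> ? ?; nra. Qed.
Lemma sq_1_3 (X d : R) : 0 < d -> X < d ^+ 2 -> X < (3 * d) ^+ 2.
Proof. move=> ? ?; nra. Qed.
Lemma sq_2_3 (X d : R) : 0 < d -> X < (2 * d) ^+ 2 -> X < (3 * d) ^+ 2.
Proof. move=> ? ?; nra. Qed.
Lemma le_d_3d (a d : R) : 0 < d -> `|a| <= d -> `|a| <= 3 * d.
Proof. move=> ? ?; lra. Qed.
Lemma le_2d_3d (a d : R) : 0 < d -> `|a| <= 2 * d -> `|a| <= 3 * d.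
Proof. move=> ? ?; lra. Qed.

Lemma sq_shift2 (u q d : R) : 0 <= d -> `|u| <= d -> `|q| <= d / 2 -> (u + q) ^+ 2 <= u ^+ 2 + 5 / 4 * d ^+ 2.
Proof. by move=> D0; case: (abs_case u) => [[h ->]|[h ->]]; case: (abs_case q) => [[h' ->]|[h' ->]] => ? ?; nra. Qed.

Lemma sq_shift4 (u q d : R) : 0 <= d -> `|u| <= d -> `|q| <= d / 4 -> (u + q) ^+ 2 <= u ^+ 2 + 9 / 16 * d ^+ 2.
Proof. by move=> D0; case: (abs_case u) => [[h ->]|[h ->]]; case: (abs_case q) => [[h' ->]|[h' ->]] => ? ?; nra. Qed.

Lemma pos_ball (a1 a2 a3 x1 x2 x3 e d : R) : 0 < d ->
  a1 ^+ 2 + a2 ^+ 2 + a3 ^+ 2 < d ^+ 2 ->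
  `|x1 - a1| <= e -> `|x2 - a2| <= e -> `|x3 - a3| <= e -> e <= d / 4 ->
  x1 ^+ 2 + x2 ^+ 2 + x3 ^+ 2 < (2 * d) ^+ 2.
Proof.
move=> d0 ha h1 h2 h3 ed.
have [b1 b2 b3] := ball_box d0 ha.
have s1 := sq_shift4 (ltW d0) b1 (le_trans h1 ed).
have s2 := sq_shift4 (ltW d0) b2 (le_trans h2 ed).
have s3 := sq_shift4 (ltW d0) b3 (le_trans h3 ed).
rewrite !(addrC _ (_ - _)) !subrK in s1 s2 s3.
nra.
Qed.

Lemma layer_ball (x1 x2 x3 e1 e2 e3 d l : R) : 0 < d -> 0 < l -> l <= d / 2 ->
  x1 ^+ 2 + x2 ^+ 2 + x3 ^+ 2 < d ^+ 2 -> e1 ^+ 2 + e2 ^+ 2 + e3 ^+ 2 < l ^+ 2 ->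
  (x1 - e1) ^+ 2 + (x2 - e2) ^+ 2 + (x3 - e3) ^+ 2 < (3 * d) ^+ 2.
Proof.
move=> d0 l0 ld hx he.
have [b1 b2 b3] := ball_box d0 hx.
have [c1 c2 c3] := ball_box l0 he.
have f1 : `|- e1| <= d / 2 by rewrite normrN; lra.
have f2 : `|- e2| <= d / 2 by rewrite normrN; lra.
have f3 : `|- e3| <= d / 2 by rewrite normrN; lra.
have s1 := sq_shift2 (ltW d0) b1 f1.
have s2 := sq_shift2 (ltW d0) b2 f2.
have s3 := sq_shift2 (ltW d0) b3 f3.
nra.
Qed.

Lemma layer_H (Hx e1 e2 e3 Df l : R) : 0 < l -> e1 ^+ 2 + e2 ^+ 2 + e3 ^+ 2 < l ^+ 2 ->
  `|Df| <= 1 / 100 * `|e1| + 1 / 100 * `|e2| -> Hx = e3 - Df -> Hx < 2 * l.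
Proof.
move=> l0 he hD ->; have [c1 c2 c3] := ball_box l0 he.
have c3' : `|e3| < l by apply: abs_lt_of_sq => //; nra.
have := ler_norm e3; have := ler_norm (- Df); rewrite normrN; lra.
Qed.

Lemma exit_none_pos (t K d H0 H1 F l : R) : 0 < t -> 0 < d -> K * t <= d / 4 -> 0 < H0 ->
  `|H1 - H0 - t * F| <= K * t ^+ 2 -> d <= F -> H1 < 2 * l -> l <= d * t / 16 -> False.
Proof.
move=> t0 d0 Kt H0p h F0 H1l ld; move: h; rewrite ler_norml => /andP [h _].
have h1 : K * t ^+ 2 <= d / 4 * t by rewrite expr2 mulrA; apply: ler_wpM2r; lra.
have h2 : t * d <= t * F by apply: ler_wpM2l; lra.
have h3 : 0 < d * t by apply: mulr_gt0.
lra.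
Qed.

Lemma exit_none_neg (t K d H0 H1 F l : R) : 0 < t -> 0 < d -> K * t <= d / 4 -> H0 < 2 * l ->
  `|H1 - H0 - t * F| <= K * t ^+ 2 -> F <= - d -> 0 < H1 -> l <= d * t / 16 -> False.
Proof.
move=> t0 d0 Kt H0l h F0 H1p ld; move: h; rewrite ler_norml => /andP [_ h].
have h1 : K * t ^+ 2 <= d / 4 * t by rewrite expr2 mulrA; apply: ler_wpM2r; lra.
have h2 : t * F <= t * (- d) by apply: ler_wpM2l; lra.
have h3 : 0 < d * t by apply: mulr_gt0.
lra.
Qed.

Lemma exit_hit_pos (t1 tau K d H0 F : R) : 0 < t1 -> t1 <= tau -> 0 <= K -> K * tau <= d / 4 -> 0 < d -> 0 < H0 ->
  `|0 - H0 - t1 * F| <= K * t1 ^+ 2 -> d <= F -> False.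
Proof.
move=> t0 t1t K0 Kt d0 H0p h F0; move: h; rewrite ler_norml => /andP [h _].
have Kt1 : K * t1 <= K * tau by apply: ler_wpM2l.
have h1 : K * t1 ^+ 2 <= d / 4 * t1 by rewrite expr2 mulrA; apply: ler_wpM2r; lra.
have h2 : t1 * d <= t1 * F by apply: ler_wpM2l; lra.
have h3 : 0 < d * t1 by apply: mulr_gt0.
lra.
Qed.

Lemma exit_hit_neg (t1 tau K d H0 F F1 l : R) : 0 < t1 -> t1 <= tau -> 0 <= K -> K * tau <= d / 4 -> 0 < d ->
  H0 < 2 * l -> l <= d * tau / 16 ->
  `|0 - H0 - t1 * F| <= K * t1 ^+ 2 -> F <= - d -> `|F1 - F| <= K * t1 ->
  t1 <= tau / 6 /\ 3 / 4 * d <= - F1.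
Proof.
move=> t0 t1t K0 Kt d0 H0l ld h F0 hF1; move: h; rewrite ler_norml => /andP [_ h].
have Kt1 : K * t1 <= K * tau by apply: ler_wpM2l.
have h1 : K * t1 ^+ 2 <= d / 4 * t1 by rewrite expr2 mulrA; apply: ler_wpM2r; lra.
have h2 : t1 * F <= t1 * (- d) by apply: ler_wpM2l; lra.
move: hF1; rewrite ler_norml => /andP [_ h3].
split; last lra.
have h4 : d * t1 <= d * (tau / 6) by lra.
by move: h4; rewrite ler_pM2l.
Qed.

Lemma exit_second_none (t' tau K d H2 Fw l : R) : 5 / 6 * tau <= t' -> 0 < tau -> 0 <= K -> K * t' <= d / 4 ->
  `|H2 - 0 - t' * Fw| <= K * t' ^+ 2 -> 3 / 4 * d <= Fw -> H2 < 2 * l -> l <= d * tau / 16 -> 0 < d -> False.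
Proof.
move=> tt tau0 K0 Kt h Fw0 H2l ld d0; move: h; rewrite ler_norml => /andP [h _].
have t0 : 0 < t' by lra.
have h1 : K * t' ^+ 2 <= d / 4 * t' by rewrite expr2 mulrA; apply: ler_wpM2r; lra.
have h2 : t' * (3 / 4 * d) <= t' * Fw by apply: ler_wpM2l; lra.
have h3 : d * (5 / 6 * tau) <= d * t' by apply: ler_wpM2l; lra.
have h4 : 0 < d * tau by apply: mulr_gt0.
lra.
Qed.

Lemma exit_second_hit (t' K d Fw : R) : 0 < t' -> 0 <= K -> K * t' <= d / 4 -> 0 < d ->
  `|0 - 0 - t' * Fw| <= K * t' ^+ 2 -> 3 / 4 * d <= Fw -> False.
Proof.
move=> t0 K0 Kt d0 h Fw0; move: h; rewrite ler_norml => /andP [h _].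
have h1 : K * t' ^+ 2 <= d / 4 * t' by rewrite expr2 mulrA; apply: ler_wpM2r; lra.
have h2 : t' * (3 / 4 * d) <= t' * Fw by apply: ler_wpM2l; lra.
have h3 : 0 < d * t' by apply: mulr_gt0.
lra.
Qed.

Lemma pos_step (c a c' vM s1 s W : R) : 0 <= s1 <= s -> `|c - a| <= vM * s1 -> `|W| <= vM ->
  c' = c + (s - s1) * W -> `|c' - a| <= vM * s.
Proof.
move=> /andP [s10 s1s] h hW ->.
rewrite (_ : c + (s - s1) * W - a = (c - a) + (s - s1) * W); last by ring.
have ss : 0 <= s - s1 by rewrite subr_ge0.
apply: (le_trans (ler_normD _ _)); rewrite normrM (ger0_norm ss).
have := normr_ge0 W; nra.
Qed.

Lemma drift_A (A A0 A' K s1 s Lg vM : R) : 0 <= s1 <= s -> 4 * Lg * vM ^+ 2 <= K -> 0 < Lg ->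
  `|A - A0| <= K * s1 -> `|A' - A| <= 2 * Lg * vM ^+ 2 * (s - s1) -> `|A' - A0| <= K * s.
Proof.
move=> /andP [s10 s1s] hK Lg0 h1 h2.
rewrite (_ : A' - A0 = (A' - A) + (A - A0)); last by ring.
apply: (le_trans (ler_normD _ _)).
have : 2 * Lg * vM ^+ 2 * (s - s1) <= K * (s - s1) by apply: ler_wpM2r; [lra | nra].
lra.
Qed.

Lemma drift_F (F F0 F' K s1 s Lg vM : R) : 0 <= s1 <= s -> 4 * Lg * vM ^+ 2 <= K ->
  `|F| <= `|F0| + K * s1 -> `|F' - F| <= 4 * Lg * vM ^+ 2 * (s - s1) -> `|F'| <= `|F0| + K * s.
Proof.
move=> /andP [s10 s1s] hK h1 h2.
have : 4 * Lg * vM ^+ 2 * (s - s1) <= K * (s - s1) by apply: ler_wpM2r; lra.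
have := ler_normD (F' - F) F; rewrite subrK; lra.
Qed.

Lemma mul_small (g D : R) : `|g| <= 1 / 100 -> `|g * D| <= `|D| / 100.
Proof. move=> h; rewrite normrM; have := normr_ge0 D; nra. Qed.

Lemma final_arith (w1 w2 w3 v1 v2 v3 g1 g2 h1 h2 F0 al dl eps : R) :
  0 < eps -> dl = eps / 8 -> 0 <= al -> al <= eps / 64 ->
  `|g1| <= 1 / 100 -> `|g2| <= 1 / 100 ->
  `|(w1 + g1 * w3) - (v1 + h1 * v3)| <= al -> `|(w2 + g2 * w3) - (v2 + h2 * v3)| <= al ->
  `|(h1 - g1) * v3| <= al / 2 -> `|(h2 - g2) * v3| <= al / 2 ->
  `|(h1 - g1) * v1 + (h2 - g2) * v2| <= al ->
  `|w3 - g1 * w1 - g2 * w2| <= `|F0| + al -> F0 = v3 - h1 * v1 - h2 * v2 -> `|F0| < dl ->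
  (w1 - v1) ^+ 2 + (w2 - v2) ^+ 2 + (w3 - v3) ^+ 2 < eps ^+ 2.
Proof.
move=> e0 -> al0 ale hg1 hg2 hA1 hA2 hB1 hB2 hC hF F0E hF0.
set D1 := w1 - v1; set D2 := w2 - v2; set D3 := w3 - v3.
have m1 := mul_small D3 hg1; have m2 := mul_small D3 hg2.
have m3 := mul_small D1 hg1; have m4 := mul_small D2 hg2.
have e1 : D1 + g1 * D3 = ((w1 + g1 * w3) - (v1 + h1 * v3)) + (h1 - g1) * v3 by rewrite /D1 /D3; ring.
have e2 : D2 + g2 * D3 = ((w2 + g2 * w3) - (v2 + h2 * v3)) + (h2 - g2) * v3 by rewrite /D2 /D3; ring.
have e3 : D3 - g1 * D1 - g2 * D2 = (w3 - g1 * w1 - g2 * w2) - F0 - ((h1 - g1) * v1 + (h2 - g2) * v2).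
  by rewrite F0E /D1 /D2 /D3; ring.
have k1 : `|D1 + g1 * D3| <= 3 / 2 * al by rewrite e1; apply: (le_trans (ler_normD _ _)); lra.
have k2 : `|D2 + g2 * D3| <= 3 / 2 * al by rewrite e2; apply: (le_trans (ler_normD _ _)); lra.
have k3 : `|D3 - g1 * D1 - g2 * D2| <= 2 * (eps / 8) + 2 * al.
  rewrite e3; apply: (le_trans (ler_normB _ _)); apply: (le_trans (lerD (ler_normB _ _) (lexx _))).
  have := normr_ge0 F0; lra.
have l1 : `|D1| <= 3 / 2 * al + `|D3| / 100.
  have := ler_normB (D1 + g1 * D3) (g1 * D3); rewrite addrK; lra.
have l2 : `|D2| <= 3 / 2 * al + `|D3| / 100.
  have := ler_normB (D2 + g2 * D3) (g2 * D3); rewrite addrK; lra.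
have l3 : `|D3| <= 2 * (eps / 8) + 2 * al + `|D1| / 100 + `|D2| / 100.
  have := ler_normD (D3 - g1 * D1 - g2 * D2) (g1 * D1 + g2 * D2).
  rewrite (_ : D3 - g1 * D1 - g2 * D2 + (g1 * D1 + g2 * D2) = D3); last by ring.
  have := ler_normD (g1 * D1) (g2 * D2); lra.
have b3 : `|D3| <= 3 / 10 * eps by lra.
have b1 : `|D1| <= 1 / 20 * eps by lra.
have b2 : `|D2| <= 1 / 20 * eps by lra.
have := sq_le_abs b1; have := sq_le_abs b2; have := sq_le_abs b3; nra.
Qed.
End Arith.


Section Arith2.
Variable R : realType.

Lemma K_nonneg (Lg vM K : R) : 0 < Lg -> 4 * Lg * vM ^+ 2 <= K -> 0 <= K.
Proof. move=> ? ?; nra. Qed.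
Lemma KT_mono2 (X c K t : R) : c <= K -> X <= c * t ^+ 2 -> X <= K * t ^+ 2.
Proof. move=> ? ?; nra. Qed.
Lemma KT_mono1 (X c K t : R) : 0 <= t -> c <= K -> X <= c * t -> X <= K * t.
Proof. move=> ? ? ?; nra. Qed.
Lemma abs_ge (F dl : R) : dl <= `|F| -> dl <= F \/ F <= - dl.
Proof. by case: (abs_case F) => [[_ ->]|[_ ->]] => h; [left | right]; lra. Qed.
Lemma Kt_mono (K t tau dl : R) : 0 <= K -> 0 <= t -> t <= tau -> K * tau <= dl / 4 -> K * t <= dl / 4.
Proof. move=> ? ? ? ?; nra. Qed.
Lemma five_sixth (t1 tau : R) : t1 <= tau / 6 -> 5 / 6 * tau <= tau - t1.
Proof. move=> ?; lra. Qed.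
Lemma neg_le (a F F' : R) : a <= - F -> F' = - F -> a <= F'.
Proof. by move=> h ->. Qed.
Lemma mono_vM (vM s teps d : R) : 0 <= vM -> s <= teps -> vM * teps <= d / 4 -> vM * s <= d / 4.
Proof. move=> ? ? ?; nra. Qed.
Lemma Ks_mono (K s teps e : R) : 0 <= K -> s <= teps -> K * teps <= e -> K * s <= e.
Proof. move=> ? ? ?; nra. Qed.
Lemma gdiff_arith (dG Lg D1 D2 vM s v3 K : R) : 0 <= s -> 0 < Lg -> `|dG| <= Lg * (`|D1| + `|D2|) ->
  `|D1| <= vM * s -> `|D2| <= vM * s -> `|v3| <= vM -> 4 * Lg * vM ^+ 2 <= K ->
  `|dG * v3| <= K * s / 2.
Proof.
move=> s0 Lg0 h h1 h2 hv hK; rewrite normrM.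
have a0 := normr_ge0 D1; have b0 := normr_ge0 D2; have c0 := normr_ge0 v3; have d0 := normr_ge0 dG.
have vs0 : 0 <= vM * s by lra.
have vM0 : 0 <= vM by apply: le_trans c0 hv.
have e1 : `|dG| <= 2 * Lg * (vM * s) by nra.
have e2 : `|dG| * `|v3| <= 2 * Lg * (vM * s) * vM by nra.
have e3 : 2 * Lg * vM ^+ 2 * s <= K * s / 2 by nra.
nra.
Qed.
Lemma gdiff2 (a b K s : R) : `|a| <= K * s / 2 -> `|b| <= K * s / 2 -> `|a + b| <= K * s.
Proof. move=> ? ?; apply: (le_trans (ler_normD _ _)); lra. Qed.
Lemma zero_le (vM : R) : `|0 : R| <= vM * 0.
Proof. by rewrite normr0 mulr0. Qed.
Lemma itv0 (t : R) : 0 <= t -> (0 : R) <= 0 <= t.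
Proof. by move=> h; apply/andP; split. Qed.
Lemma itvr (t : R) : 0 <= t -> 0 <= t <= t.
Proof. by move=> h; apply/andP; split. Qed.
Lemma itvl (a t : R) : 0 <= a -> a <= t -> a <= t <= t.
Proof. by move=> h h'; apply/andP; split. Qed.
Lemma sub_le2 (t2 t1 tau : R) : 0 <= t1 -> t2 <= tau -> t2 - t1 <= tau.
Proof. move=> ? ?; lra. Qed.
Lemma Ktau_aux (K tau teps eps : R) : 0 < eps -> 0 <= K -> tau <= teps -> K * teps <= eps / 64 ->
  K * tau <= eps / 8 / 4.
Proof. move=> ? ? h ?; have : K * tau <= K * teps by apply: ler_wpM2l. lra. Qed.
End Arith2.


Section Chart.
Variable R : realType.
Notation V3 := 'rV[R]_3.
Variables (Om : set V3) (n : V3 -> V3) (d : R) (p0 b1 b2 b3 : V3) (f : R -> R -> R) (Lg : R).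
Hypothesis hd : 0 < d.
Hypothesis hON : orthonormal3 b1 b2 b3.
Hypothesis hch : forall z, eball p0 (3 * d) z ->
     (bdry Om z <-> exists u1 u2, z = chart_pt p0 b1 b2 b3 u1 u2 (f u1 u2)) /\
     (Om z <-> exists u1 u2 u3, z = chart_pt p0 b1 b2 b3 u1 u2 u3 /\ f u1 u2 < u3).
Hypothesis hf : partials_exist f.
Hypothesis hpd : forall a b, `|pd1 f a b| <= 1 / 100 /\ `|pd2 f a b| <= 1 / 100.
Hypothesis hLg : 0 < Lg.
Hypothesis hLip : forall a b a' b', `|a| <= 3 * d -> `|b| <= 3 * d -> `|a'| <= 3 * d -> `|b'| <= 3 * d ->
  `|pd1 f a b - pd1 f a' b'| <= Lg * (`|a - a'| + `|b - b'|) /\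
  `|pd2 f a b - pd2 f a' b'| <= Lg * (`|a - a'| + `|b - b'|).
Hypothesis hnor : outward_unit_normal Om n.

Definition cz (b z : V3) := dot (z - p0) b.
Definition Hf z := cz b3 z - f (cz b1 z) (cz b2 z).
Definition G1 z := pd1 f (cz b1 z) (cz b2 z).
Definition G2 z := pd2 f (cz b1 z) (cz b2 z).
Definition Fq z (w : V3) := dot w b3 - G1 z * dot w b1 - G2 z * dot w b2.
Definition A1 z (w : V3) := dot w b1 + G1 z * dot w b3.
Definition A2 z (w : V3) := dot w b2 + G2 z * dot w b3.
Definition sp (w : V3) := dot w b1 ^+ 2 + dot w b2 ^+ 2 + dot w b3 ^+ 2.

Lemma on11 : dot b1 b1 = 1. Proof. by case: hON. Qed.
Lemma on22 : dot b2 b2 = 1. Proof. by case: hON. Qed.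
Lemma on33 : dot b3 b3 = 1. Proof. by case: hON. Qed.
Lemma on12 : dot b1 b2 = 0. Proof. by case: hON => _ _ _ []. Qed.
Lemma on13 : dot b1 b3 = 0. Proof. by case: hON => _ _ _ []. Qed.
Lemma on23 : dot b2 b3 = 0. Proof. by case: hON => _ _ _ []. Qed.
Lemma on21 : dot b2 b1 = 0. Proof. by rewrite dotC on12. Qed.
Lemma on31 : dot b3 b1 = 0. Proof. by rewrite dotC on13. Qed.
Lemma on32 : dot b3 b2 = 0. Proof. by rewrite dotC on23. Qed.

Lemma czD b z w t : cz b (z + t *: w) = cz b z + t * dot w b.
Proof. by rewrite /cz (_ : z + t *: w - p0 = (z - p0) + t *: w) ?dotDl ?dotZl // addrAC. Qed.

Lemma czB b z z' : cz b z - cz b z' = dot (z - z') b.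
Proof. by rewrite /cz -dotBl; congr dot; rewrite opprB addrA subrK. Qed.

Lemma chart_cz u1 u2 u3 :
  [/\ cz b1 (chart_pt p0 b1 b2 b3 u1 u2 u3) = u1,
      cz b2 (chart_pt p0 b1 b2 b3 u1 u2 u3) = u2 &
      cz b3 (chart_pt p0 b1 b2 b3 u1 u2 u3) = u3].
Proof.
have E : chart_pt p0 b1 b2 b3 u1 u2 u3 - p0 = u1 *: b1 + u2 *: b2 + u3 *: b3.
  by rewrite /chart_pt -(addrA p0) -(addrA p0) (addrC p0) addrK.
rewrite /cz E !dotDl !dotZl on11 on22 on33 on12 on13 on23 on21 on31 on32.
split; ring.
Qed.

Lemma cz_chart z : z = chart_pt p0 b1 b2 b3 (cz b1 z) (cz b2 z) (cz b3 z).
Proof.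
by rewrite /chart_pt /cz -(addrA p0) -(addrA p0) -(span3 hON (z - p0)) (addrC p0) subrK.
Qed.

Lemma dot_coords (u w : V3) : dot u w = dot u b1 * dot w b1 + dot u b2 * dot w b2 + dot u b3 * dot w b3.
Proof. exact: parseval. Qed.

Lemma enorm_sq (w : V3) : enorm w ^+ 2 = sp w.
Proof.
rewrite /enorm sqr_sqrtr; last by rewrite dot_coords; nra.
by rewrite dot_coords /sp; ring.
Qed.

Lemma sp_ge0 w : 0 <= sp w.
Proof. rewrite /sp; nra. Qed.

Lemma enorm_lt (w : V3) r : 0 < r -> sp w < r ^+ 2 -> enorm w < r.
Proof.
move=> r0 h; rewrite /enorm; apply: sqrt_lt => //; rewrite dot_coords; last by move: h; rewrite /sp; nra.
nra.
Qed.

Lemma enorm_lt_inv (w : V3) r : enorm w < r -> sp w < r ^+ 2.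
Proof.
move=> h; rewrite -enorm_sq; have e0 : 0 <= enorm w by apply: sqrtr_ge0.
nra.
Qed.

Lemma enorm_le_inv (w : V3) r : enorm w <= r -> sp w <= r ^+ 2.
Proof.
move=> h; rewrite -enorm_sq; have e0 : 0 <= enorm w by apply: sqrtr_ge0.
nra.
Qed.

Lemma ball_sq z r : eball p0 r z -> cz b1 z ^+ 2 + cz b2 z ^+ 2 + cz b3 z ^+ 2 < r ^+ 2.
Proof. by move=> /enorm_lt_inv. Qed.

Lemma sq_ball z r : 0 < r -> cz b1 z ^+ 2 + cz b2 z ^+ 2 + cz b3 z ^+ 2 < r ^+ 2 -> eball p0 r z.
Proof. by move=> r0 h; apply: enorm_lt. Qed.

Lemma Hsign z : eball p0 (3 * d) z -> (Om z <-> 0 < Hf z) /\ (bdry Om z <-> Hf z = 0).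
Proof.
move=> zb; have [hb ho] := hch zb; split.
  rewrite ho; split.
    move=> [u1 [u2 [u3 [E lt]]]]; have [c1 c2 c3] := chart_cz u1 u2 u3.
    by rewrite /Hf E c1 c2 c3 subr_gt0.
  by move=> h; exists (cz b1 z), (cz b2 z), (cz b3 z); split; [exact: cz_chart | rewrite -subr_gt0].
rewrite hb; split.
  move=> [u1 [u2 E]]; have [c1 c2 c3] := chart_cz u1 u2 (f u1 u2).
  by rewrite /Hf E c1 c2 c3 subrr.
move=> h; exists (cz b1 z), (cz b2 z); rewrite {1}(cz_chart z); congr chart_pt.
by move/eqP: h; rewrite subr_eq0 => /eqP.
Qed.

Lemma f_lip a b a' b' : `|a| <= 3 * d -> `|b| <= 3 * d -> `|a'| <= 3 * d -> `|b'| <= 3 * d ->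
  `|f a b - f a' b'| <= 1 / 100 * `|a - a'| + 1 / 100 * `|b - b'|.
Proof. by apply: lip1 => // u v _ _; apply: hpd. Qed.

Lemma taylor a b q1 q2 : `|a| <= 3 * d -> `|b| <= 3 * d -> `|a + q1| <= 3 * d -> `|b + q2| <= 3 * d ->
  `|f (a + q1) (b + q2) - f a b - (pd1 f a b * q1 + pd2 f a b * q2)| <= Lg * (`|q1| + `|q2|) ^+ 2.
Proof.
move=> ha hb ha' hb'.
have [c [hc Ec]] := mvt_all (fun t => (hf t (b + q2)).1) a (a + q1).
have [e [he Ee]] := mvt_all (fun t => (hf a t).2) b (b + q2).
have -> : f (a + q1) (b + q2) - f a b - (pd1 f a b * q1 + pd2 f a b * q2) =
  (f (a + q1) (b + q2) - f a (b + q2)) + (f a (b + q2) - f a b) - (pd1 f a b * q1 + pd2 f a b * q2) by ring.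
rewrite Ec Ee -/(pd1 f c (b + q2)) -/(pd2 f a e).
have hc' := between_box hc ha ha'; have he' := between_box he hb hb'.
have [L1 _] := hLip hc' hb' ha hb; have [_ L2] := hLip ha he' ha hb.
have cq := between_dist hc; have eq' := between_dist he.
have -> : pd1 f c (b + q2) * (a + q1 - a) + pd2 f a e * (b + q2 - b) - (pd1 f a b * q1 + pd2 f a b * q2)
  = (pd1 f c (b + q2) - pd1 f a b) * q1 + (pd2 f a e - pd2 f a b) * q2 by ring.
exact: taylor_arith hLg cq eq' L1 L2.
Qed.
Definition box z := `|cz b1 z| <= 3 * d /\ `|cz b2 z| <= 3 * d.

Lemma G_lip z z' : box z -> box z' ->
  `|G1 z - G1 z'| <= Lg * (`|cz b1 z - cz b1 z'| + `|cz b2 z - cz b2 z'|) /\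
  `|G2 z - G2 z'| <= Lg * (`|cz b1 z - cz b1 z'| + `|cz b2 z - cz b2 z'|).
Proof. by move=> [h1 h2] [h3 h4]; apply: hLip. Qed.

Lemma seg_all z w t vM : 0 <= t -> `|dot w b1| <= vM -> `|dot w b2| <= vM -> `|dot w b3| <= vM ->
  box z -> box (z + t *: w) ->
  [/\ `|Hf (z + t *: w) - Hf z - t * Fq z w| <= 4 * Lg * vM ^+ 2 * t ^+ 2,
      `|Fq (z + t *: w) w - Fq z w| <= 4 * Lg * vM ^+ 2 * t,
      `|A1 (z + t *: w) w - A1 z w| <= 2 * Lg * vM ^+ 2 * t &
      `|A2 (z + t *: w) w - A2 z w| <= 2 * Lg * vM ^+ 2 * t].
Proof.
move=> t0 h1 h2 h3 bz bz'.
have [L1 L2] := G_lip bz' bz.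
have ee : forall a b : R, a + b - a = b by move=> a b; ring.
rewrite !czD !ee !normrM (ger0_norm t0) in L1 L2.
have [bz1 bz2] := bz; have [bz1' bz2'] := bz'; rewrite !czD in bz1' bz2'.
have T := taylor bz1 bz2 bz1' bz2'.
have [HA HB HC HD] := seg_arith t0 hLg h1 h2 h3 L1 L2 T.
split.
- rewrite /Hf !czD.
  have -> : cz b3 z + t * dot w b3 - f (cz b1 z + t * dot w b1) (cz b2 z + t * dot w b2) -
      (cz b3 z - f (cz b1 z) (cz b2 z)) - t * Fq z w =
      - (f (cz b1 z + t * dot w b1) (cz b2 z + t * dot w b2) - f (cz b1 z) (cz b2 z) -
         (pd1 f (cz b1 z) (cz b2 z) * (t * dot w b1) + pd2 f (cz b1 z) (cz b2 z) * (t * dot w b2))).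
    by rewrite /Fq /G1 /G2; ring.
  by rewrite normrN.
- rewrite /Fq.
  have -> : dot w b3 - G1 (z + t *: w) * dot w b1 - G2 (z + t *: w) * dot w b2 -
    (dot w b3 - G1 z * dot w b1 - G2 z * dot w b2)
    = - ((G1 (z + t *: w) - G1 z) * dot w b1) - (G2 (z + t *: w) - G2 z) * dot w b2 by ring.
  exact: HB.
- rewrite /A1.
  have -> : dot w b1 + G1 (z + t *: w) * dot w b3 - (dot w b1 + G1 z * dot w b3)
    = (G1 (z + t *: w) - G1 z) * dot w b3 by ring.
  exact: HC.
- rewrite /A2.
  have -> : dot w b2 + G2 (z + t *: w) * dot w b3 - (dot w b2 + G2 z * dot w b3)
    = (G2 (z + t *: w) - G2 z) * dot w b3 by ring.
  exact: HD.
Qed.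
Lemma tangent y (a b : R) : bdry Om y ->
  cz b1 y ^+ 2 + cz b2 y ^+ 2 + cz b3 y ^+ 2 < (2 * d) ^+ 2 -> `|a| <= 1 -> `|b| <= 1 ->
  a * dot (n y) b1 + b * dot (n y) b2 + (a * G1 y + b * G2 y) * dot (n y) b3 = 0.
Proof.
move=> bd yb ha hb.
have yb3 : eball p0 (3 * d) y by apply: sq_ball; [exact: pos3 | exact: sq23].
have Hy : Hf y = 0 := proj1 (proj2 (Hsign yb3)) bd.
have [nN tang _] := hnor bd.
have spN : sp (n y) = 1 by rewrite -enorm_sq nN expr1n.
have N3le := sp1_le spN.
apply: small_zero => e e0.
have [r [r0 hr]] := tang e e0.
have [t [t0 tr td te]] := min3 (pos_div r0 (ltr0Sn _ 1)) (pos_div hd (ltr0Sn _ 9)) (pos_div e0 (pos4 hLg)).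
have hq1 := abs_mul_le t0 ha; have hq2 := abs_mul_le t0 hb.
have [b1y b2y b1z b2z] := coords_arith hd yb hq1 hq2 td.
have hD := flip_arith (f_lip b1z b2z b1y b2y) hq1 hq2.
have hT := lg_sq hLg (taylor b1y b2y b1z b2z) (sum_abs_sq t0 hq1 hq2).
have u3f : cz b3 y = f (cz b1 y) (cz b2 y) by apply: eq_sub0.
set D := f (cz b1 y + t * a) (cz b2 y + t * b) - f (cz b1 y) (cz b2 y) in hD hT.
pose z := chart_pt p0 b1 b2 b3 (cz b1 y + t * a) (cz b2 y + t * b) (cz b3 y + D).
have [cz1 cz2 cz3] := chart_cz (cz b1 y + t * a) (cz b2 y + t * b) (cz b3 y + D).
rewrite -/z in cz1 cz2 cz3.
have zb : eball p0 (3 * d) z.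
  apply: sq_ball; first exact: pos3.
  rewrite cz1 cz2 cz3; apply: ball_arith => //.
  - exact: le_trans hq1 td.
  - exact: le_trans hq2 td.
  - exact: D_small hD td t0.
have bdz : bdry Om z.
  apply/((hch zb).1); exists (cz b1 y + t * a), (cz b2 y + t * b).
  by rewrite /z /D u3f; congr chart_pt; ring.
have c1 : dot (z - y) b1 = t * a by rewrite -czB cz1; ring.
have c2 : dot (z - y) b2 = t * b by rewrite -czB cz2; ring.
have c3 : dot (z - y) b3 = D by rewrite -czB cz3; ring.
have nz : enorm (z - y) < 2 * t.
  apply: enorm_lt; first exact: pos2.
  by rewrite /sp c1 c2 c3; apply: nz_arith.
have := hr z bdz (lt_le2 nz tr).
rewrite dot_coords c1 c2 c3 => htg.
have htg' := htg_arith e0 htg nz.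
exact: tangent_arith t0 e0 hLg N3le (te_arith hLg te) htg' hT.
Qed.

Lemma refl_coord (w m b : V3) : dot (refl w m) b = dot w b - 2 * dot w m * dot m b.
Proof. by rewrite /refl dotBl dotZl. Qed.

Lemma refl_inv y w : bdry Om y ->
  cz b1 y ^+ 2 + cz b2 y ^+ 2 + cz b3 y ^+ 2 < (2 * d) ^+ 2 ->
  [/\ A1 y (refl w (n y)) = A1 y w, A2 y (refl w (n y)) = A2 y w,
      Fq y (refl w (n y)) = - Fq y w & sp (refl w (n y)) = sp w].
Proof.
move=> bd yb.
have n1 : `|1 : R| <= 1 by rewrite normr1.
have n0 : `|0 : R| <= 1 by rewrite normr0 ler01.
have t1 := tangent bd yb n1 n0; have t2 := tangent bd yb n0 n1.
have h1 : dot (n y) b1 + G1 y * dot (n y) b3 = 0 by rewrite -t1; ring.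
have h2 : dot (n y) b2 + G2 y * dot (n y) b3 = 0 by rewrite -t2; ring.
have [nN _ _] := hnor bd.
have spN : sp (n y) = 1 by rewrite -enorm_sq nN expr1n.
have ew : dot w (n y) = dot w b1 * dot (n y) b1 + dot w b2 * dot (n y) b2 + dot w b3 * dot (n y) b3
  := dot_coords w (n y).
have := refl_alg (dot w b1) (dot w b2) (dot w b3) h1 h2 spN.
rewrite /A1 /A2 /Fq /sp !refl_coord ew.
by move=> /= [-> -> -> ->].
Qed.

Lemma ball_d_facts z : eball p0 d z ->
  [/\ box z, eball p0 (3 * d) z & cz b1 z ^+ 2 + cz b2 z ^+ 2 + cz b3 z ^+ 2 < (2 * d) ^+ 2].
Proof.
move=> zb; have h := ball_sq zb; have [c1 c2 _] := ball_box hd h.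
split; first by split; apply: le_d_3d.
- by apply: sq_ball; [exact: pos3 | exact: sq_1_3].
- exact: sq_1_2.
Qed.

Lemma ball2_facts z : cz b1 z ^+ 2 + cz b2 z ^+ 2 + cz b3 z ^+ 2 < (2 * d) ^+ 2 ->
  box z /\ eball p0 (3 * d) z.
Proof.
move=> h; have [c1 c2 _] := ball_box (pos2 hd) h.
split; first by split; apply: le_2d_3d.
by apply: sq_ball; [exact: pos3 | exact: sq_2_3].
Qed.

Lemma sp_bound w vM : 0 <= vM -> sp w <= vM ^+ 2 ->
  [/\ `|dot w b1| <= vM, `|dot w b2| <= vM & `|dot w b3| <= vM].
Proof. by move=> h0 h; apply: sp_coords. Qed.

Lemma layer_H_lemma z l : 0 < l -> l <= d / 2 -> eball p0 d z -> layer Om l z ->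
  0 < Hf z /\ Hf z < 2 * l.
Proof.
move=> l0 ld zb [Oz [y [bdy hy]]].
have [bz b3z z2] := ball_d_facts zb.
split; first exact: ((Hsign b3z).1).1.
have hsp := enorm_lt_inv hy.
have cy : forall b, cz b y = cz b z - dot (z - y) b by move=> b; rewrite -czB; ring.
have yb : eball p0 (3 * d) y.
  apply: sq_ball; first exact: pos3.
  rewrite !cy; exact: layer_ball hd l0 ld (ball_sq zb) hsp.
have Hy : Hf y = 0 := proj1 (proj2 (Hsign yb)) bdy.
have [c1 c2 _] := ball_box (pos3 hd) (ball_sq yb).
have [bz1 bz2] := bz.
have hfl := f_lip bz1 bz2 c1 c2.
rewrite !czB in hfl.
apply: (layer_H l0 hsp hfl).
by rewrite -czB -[Hf z]subr0 -Hy /Hf; ring.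
Qed.

Lemma F0_small x v X Vs T vM K dl tau l :
  bT Om n x v X Vs T -> 0 < vM -> sp v <= vM ^+ 2 -> 4 * Lg * vM ^+ 2 <= K ->
  0 < dl -> 0 < tau -> K * tau <= dl / 4 -> 0 < l -> l <= dl * tau / 16 ->
  (forall s, 0 <= s <= tau -> eball p0 d (X s) /\ 0 < Hf (X s) /\ Hf (X s) < 2 * l) ->
  `|Fq x v| < dl.
Proof.
move=> hb vM0 spv hK dl0 tau0 Ktau l0 ldl HX.
have K0 := K_nonneg hLg hK.
have [hv1 hv2 hv3] := sp_bound (ltW vM0) spv.
have [_ _ X0 V0 _] := hb.
have tau0' : 0 <= tau by apply: ltW.
have Hs : forall s, 0 <= s <= tau -> [/\ box (X s), eball p0 (3 * d) (X s),
    cz b1 (X s) ^+ 2 + cz b2 (X s) ^+ 2 + cz b3 (X s) ^+ 2 < (2 * d) ^+ 2,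
    0 < Hf (X s) & Hf (X s) < 2 * l].
  move=> s hs; have [b [h1 h2]] := HX s hs; have [? ? ?] := ball_d_facts b; by split.
have i0 := itv0 tau0'.
have itau := itvr tau0'.
have [bx _ _ Hx0 Hx1] := Hs 0 i0; rewrite X0 in bx Hx0 Hx1.
rewrite ltNge; apply/negP => hF.
have hF' := abs_ge hF.
have noTcase : forall t1, 0 < t1 <= tau -> (forall u, 0 < u < t1 -> ~ T u) ->
    X t1 = x + t1 *: v.
  move=> t1 /andP [t10 t1t] noT.
  by rewrite (seg hb (s1 := 0) (s2 := t1)) ?X0 ?V0 ?subr0 //; apply/andP; split => //; apply: ltW.
have segx : forall t1, 0 < t1 <= tau -> X t1 = x + t1 *: v ->
    `|Hf (X t1) - Hf x - t1 * Fq x v| <= K * t1 ^+ 2 /\ `|Fq (X t1) v - Fq x v| <= K * t1.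
  move=> t1 /andP [t10 t1t] E.
  have it1 : 0 <= t1 <= tau by apply/andP; split => //; apply: ltW.
  have [bt1 _ _ _ _] := Hs t1 it1; rewrite E in bt1 *.
  have [A B _ _] := seg_all (ltW t10) hv1 hv2 hv3 bx bt1.
  split; [exact: KT_mono2 hK A | exact: KT_mono1 (ltW t10) hK B].
have [none|[t1 [/andP [t10 t1t] Tt1 noT1]]] := first_rebound hb i0.
  have noTt : forall u, 0 < u < tau -> ~ T u.
    by move=> u /andP [? ?]; apply: none; apply/andP; split => //; apply: ltW.
  have taui : 0 < tau <= tau by apply/andP; split.
  have E := noTcase tau taui noTt.
  have [A _] := segx tau taui E.
  have [_ _ _ H1 H2] := Hs tau itau.
  case: hF' => hF'.
  - exact: exit_none_pos tau0 dl0 Ktau Hx0 A hF' H2 ldl.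
  - exact: exit_none_neg tau0 dl0 Ktau Hx1 A hF' H1 ldl.
have it1 : 0 <= t1 <= tau by apply/andP; split => //; apply: ltW.
have t1i : 0 < t1 <= tau by apply/andP.
have E1 := noTcase t1 t1i noT1.
have [A1' B1'] := segx t1 t1i E1.
have t1i' : (0 : R) <= 0 < t1 by apply/andP.
have [Vt1 bdt1] := refl_at hb t1i' Tt1 noT1.
rewrite V0 in Vt1.
have [bt1 b3t1 s2t1 _ _] := Hs t1 it1.
have Ht1 : Hf (X t1) = 0 := proj1 (proj2 (Hsign b3t1)) bdt1.
rewrite Ht1 in A1'.
case: hF' => hF'.
  exact: exit_hit_pos t10 t1t K0 Ktau dl0 Hx0 A1' hF'.
have [t1s Fn] := exit_hit_neg t10 t1t K0 Ktau dl0 Hx1 ldl A1' hF' B1'.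
have [eA1 eA2 eF esp] := refl_inv v bdt1 s2t1.
rewrite -Vt1 in eA1 eA2 eF esp.
have Fw := neg_le Fn eF.
have spw : sp (Vs t1) <= vM ^+ 2 by rewrite esp.
have [hw1 hw2 hw3] := sp_bound (ltW vM0) spw.
have it1' : 0 <= t1 <= tau by [].
have [none2|[t2 [/andP [t12 t2t] Tt2 noT2]]] := first_rebound hb it1'.
  have E2 : X tau = X t1 + (tau - t1) *: Vs t1.
    apply: (seg hb) => //.
    by move=> u /andP [? ?]; apply: none2; apply/andP; split => //; apply: ltW.
  have [btau _ _ _ H2] := Hs tau itau.
  have tt : 0 <= tau - t1 by rewrite subr_ge0.
  rewrite E2 in btau H2.
  have [A _ _ _] := seg_all tt hw1 hw2 hw3 bt1 btau.
  have A2 := KT_mono2 hK A; rewrite Ht1 in A2.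
  exact: exit_second_none (five_sixth t1s) tau0 K0 (Kt_mono K0 tt (sub_le2 (ltW t10) (lexx tau)) Ktau) A2 Fw H2 ldl dl0.
have E2 : X t2 = X t1 + (t2 - t1) *: Vs t1.
  apply: (seg hb) => //; by apply/andP; split; [apply: ltW | apply: ltW].
have it2 : 0 <= t2 <= tau by apply/andP; split => //; apply: ltW; apply: lt_trans t10 t12.
have [bt2 b3t2 _ _ _] := Hs t2 it2.
have [bdt2 _] := (let: conj a b := (match hb with And5 _ _ _ _ (And3 _ _ h) => h end) t2 Tt2 in conj a b).
have Ht2 : Hf (X t2) = 0 := proj1 (proj2 (Hsign b3t2)) bdt2.
have tt : 0 < t2 - t1 by rewrite subr_gt0.
rewrite E2 in bt2 Ht2.
have [A _ _ _] := seg_all (ltW tt) hw1 hw2 hw3 bt1 bt2.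
have A2 := KT_mono2 hK A; rewrite Ht1 Ht2 in A2.
have Kt' : K * (t2 - t1) <= dl / 4.
  exact: Kt_mono K0 (ltW tt) (sub_le2 (ltW t10) t2t) Ktau.
exact: exit_second_hit tt K0 Kt' dl0 A2 Fw.
Qed.

Definition Qp (x v : V3) (vM K s : R) (z w : V3) :=
  [/\ `|cz b1 z - cz b1 x| <= vM * s, `|cz b2 z - cz b2 x| <= vM * s,
      `|cz b3 z - cz b3 x| <= vM * s, sp w = sp v &
   [/\ `|A1 z w - A1 x v| <= K * s, `|A2 z w - A2 x v| <= K * s &
       `|Fq z w| <= `|Fq x v| + K * s]].

Lemma Qp_ball x v vM K s z w : eball p0 d x -> 0 <= vM -> vM * s <= d / 4 -> Qp x v vM K s z w ->
  cz b1 z ^+ 2 + cz b2 z ^+ 2 + cz b3 z ^+ 2 < (2 * d) ^+ 2.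
Proof.
move=> xb vM0 hs [p1 p2 p3 _ _].
exact: pos_ball hd (ball_sq xb) p1 p2 p3 hs.
Qed.

Lemma propagate x v X Vs T vM K teps :
  bT Om n x v X Vs T -> 0 < vM -> sp v <= vM ^+ 2 -> 4 * Lg * vM ^+ 2 <= K ->
  0 <= teps -> vM * teps <= d / 4 -> eball p0 d x ->
  forall s, 0 <= s <= teps -> Qp x v vM K s (X s) (Vs s).
Proof.
move=> hb vM0 spv hK teps0 hteps xb.
apply: (billiard_induct hb teps0).
- rewrite /Qp !subrr !normr0 !mulr0 addr0; split => //.
- move=> s1 s z w /andP [s10 s1s] sM [p1 p2 p3 spw [a1 a2 f1]].
  have s1M : s1 <= teps by apply: le_trans s1s sM.
  have zq : Qp x v vM K s1 z w by split.
  have z2 := Qp_ball xb (ltW vM0) (mono_vM (ltW vM0) s1M hteps) zq.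
  have [bz _] := ball2_facts z2.
  have spw' : sp w <= vM ^+ 2 by rewrite spw.
  have [hw1 hw2 hw3] := sp_bound (ltW vM0) spw'.
  have i1 : 0 <= s1 <= s by apply/andP.
  have q1 := pos_step i1 p1 hw1 (czD b1 z w (s - s1)).
  have q2 := pos_step i1 p2 hw2 (czD b2 z w (s - s1)).
  have q3 := pos_step i1 p3 hw3 (czD b3 z w (s - s1)).
  have z2' := pos_ball hd (ball_sq xb) q1 q2 q3 (mono_vM (ltW vM0) sM hteps).
  have [bz' _] := ball2_facts z2'.
  have ss : 0 <= s - s1 by rewrite subr_ge0.
  have [_ B C D] := seg_all ss hw1 hw2 hw3 bz bz'.
  split => //; split.
  + exact: drift_A i1 hK hLg a1 C.
  + exact: drift_A i1 hK hLg a2 D.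
  + exact: drift_F i1 hK f1 B.
- move=> s z w /andP [s0 sM] bdz [p1 p2 p3 spw [a1 a2 f1]].
  have zq : Qp x v vM K s z w by split.
  have z2 := Qp_ball xb (ltW vM0) (mono_vM (ltW vM0) sM hteps) zq.
  have [eA1 eA2 eF esp] := refl_inv w bdz z2.
  by split => //; [rewrite esp | rewrite eA1 eA2 eF normrN].
Qed.

Lemma vel_close x v X Vs T vM K teps eps s :
  bT Om n x v X Vs T -> 0 < vM -> sp v <= vM ^+ 2 -> 4 * Lg * vM ^+ 2 <= K ->
  0 <= teps -> vM * teps <= d / 4 -> eball p0 d x -> 0 < eps -> K * teps <= eps / 64 ->
  `|Fq x v| < eps / 8 -> 0 <= s <= teps -> enorm (Vs s - v) < eps.
Proof.
move=> hb vM0 spv hK teps0 hteps xb eps0 Kt hF hs.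
have [p1 p2 p3 spw [a1 a2 f1]] := propagate hb vM0 spv hK teps0 hteps xb hs.
have K0 := K_nonneg hLg hK.
have /andP [s0 sM] := hs.
have zq : Qp x v vM K s (X s) (Vs s) by split.
have z2 := Qp_ball xb (ltW vM0) (mono_vM (ltW vM0) sM hteps) zq.
have [bz _] := ball2_facts z2.
have [bx _ _] := ball_d_facts xb.
have [L1 L2] := G_lip bx bz.
have [hv1 hv2 hv3] := sp_bound (ltW vM0) spv.
rewrite (distrC (cz b1 x)) (distrC (cz b2 x)) in L1 L2.
have g1 := gdiff_arith s0 hLg L1 p1 p2 hv3 hK.
have g2 := gdiff_arith s0 hLg L2 p1 p2 hv3 hK.
have g3 := gdiff2 (gdiff_arith s0 hLg L1 p1 p2 hv1 hK) (gdiff_arith s0 hLg L2 p1 p2 hv2 hK).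
apply: enorm_lt => //.
rewrite /sp !dotBl.
apply: (final_arith (al := K * s) (h1 := G1 x) (h2 := G2 x) (g1 := G1 (X s)) (g2 := G2 (X s))
  (F0 := Fq x v) eps0 erefl (mulr_ge0 K0 s0) (Ks_mono K0 sM Kt)).
- exact: (hpd _ _).1.
- exact: (hpd _ _).2.
- exact: a1.
- exact: a2.
- exact: g1.
- exact: g2.
- exact: g3.
- exact: f1.
- by [].
- exact: hF.
Qed.

Lemma chart_main vM eps K teps tau2 l x v X Vs :
  0 < vM -> 0 < eps -> 4 * Lg * vM ^+ 2 <= K -> 0 < teps -> K * teps <= eps / 64 ->
  vM * teps <= d / 4 -> 0 < tau2 -> tau2 <= teps -> 0 < l -> l <= eps / 8 * tau2 / 16 -> l <= d / 2 ->
  eball p0 d x -> enorm v <= vM -> billiard Om n x v X Vs ->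
  (forall s, 0 <= s <= tau2 -> layer Om l (X s) /\ eball p0 d (X s)) ->
  forall s, 0 <= s <= teps -> enorm (Vs s - v) < eps.
Proof.
move=> vM0 eps0 hK teps0 Kt vt tau0 taut l0 ll ld xb hv hb hlay s hs.
have [T hT] := billiardE hb.
have spv := enorm_le_inv hv.
have K0 := K_nonneg hLg hK.
have F0 : `|Fq x v| < eps / 8.
  apply: (F0_small hT vM0 spv hK (pos_div eps0 (ltr0Sn _ 7)) tau0 (Ktau_aux eps0 K0 taut Kt) l0 ll).
  move=> s' hs'; have [hl hbx] := hlay s' hs'.
  by split => //; apply: layer_H_lemma.
exact: vel_close hT vM0 spv hK (ltW teps0) vt xb eps0 Kt F0 hs.
Qed.
End Chart.


Section Fin.
Variable R : realType.

Lemma uniform_lip (m1 : nat) (phi : 'I_m1 -> R -> R -> R) (B : R) : (forall i, C2 (phi i)) ->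
  exists Lg, 0 < Lg /\ forall i a b a' b', `|a| <= B -> `|b| <= B -> `|a'| <= B -> `|b'| <= B ->
  `|pd1 (phi i) a b - pd1 (phi i) a' b'| <= Lg * (`|a - a'| + `|b - b'|) /\
  `|pd2 (phi i) a b - pd2 (phi i) a' b'| <= Lg * (`|a - a'| + `|b - b'|).
Proof.
move=> hc.
have [Lf hLf] := choice (fun i => C2_lip B (hc i)).
exists (1 + \sum_(i < m1) Lf i); split.
  have : 0 <= \sum_(i < m1) Lf i by apply: sumr_ge0 => i _; apply: ltW; case: (hLf i).
  move=> ?; lra.
move=> i a b a' b' ha hb ha' hb'.
have [Li0 HL] := hLf i.
have le : Lf i <= 1 + \sum_(j < m1) Lf j.
  rewrite (bigD1 i) //=.
  have : 0 <= \sum_(j < m1 | j != i) Lf j by apply: sumr_ge0 => j _; apply: ltW; case: (hLf j).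
  move=> ?; lra.
have [h1 h2] := HL a b a' b' ha hb ha' hb'.
have n0 : 0 <= `|a - a'| + `|b - b'| by apply: addr_ge0; apply: normr_ge0.
split.
  exact: le_trans h1 (ler_wpM2r n0 le).
exact: le_trans h2 (ler_wpM2r n0 le).
Qed.

Lemma consts (Lg vM eps d : R) : 0 < Lg -> 0 < vM -> 0 < eps -> 0 < d ->
  exists K teps, [/\ 4 * Lg * vM ^+ 2 <= K, 0 < teps, K * teps <= eps / 64 & vM * teps <= d / 4].
Proof.
move=> Lg0 vM0 eps0 d0.
have K1 : 0 <= Lg * vM ^+ 2 by nra.
have K0 : 0 < 4 * Lg * vM ^+ 2 + 1 by lra.
have K2 : 0 < 64 * (4 * Lg * vM ^+ 2 + 1) by lra.
have K3 : 0 < 4 * vM by lra.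
have [t [t0 t1 t2 _]] := min3 (pos_div eps0 K2) (pos_div d0 K3) (ltr01 : (0 : R) < 1).
exists (4 * Lg * vM ^+ 2 + 1), t; split => //.
- lra.
- move: t1; rewrite ler_pdivlMr; last nra. move=> ?; nra.
- move: t2; rewrite ler_pdivlMr; last nra. move=> ?; nra.
Qed.

Lemma consts2 (eps d tau : R) : 0 < eps -> 0 < d -> 0 < tau ->
  exists l, [/\ 0 < l, l <= eps / 8 * tau / 16 & l <= d / 2].
Proof.
move=> e0 d0 t0.
have a0 : 0 < eps / 8 * tau / 16 by apply: divr_gt0 => //; apply: mulr_gt0 => //; apply: divr_gt0.
have two : (0 : R) < 2 by lra.
have [l [l0 l1 l2 _]] := min3 a0 (pos_div d0 two) (ltr01 : (0 : R) < 1).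
by exists l; split.
Qed.

Lemma grad_bound (p1 p2 : R) : Num.sqrt (p1 ^+ 2 + p2 ^+ 2) < 1 / 100 ->
  `|p1| <= 1 / 100 /\ `|p2| <= 1 / 100.
Proof.
move=> h; have p0 : 0 <= p1 ^+ 2 + p2 ^+ 2 by nra.
have h2 := sqrt_lt_inv p0 h.
split; apply: ltW; apply: abs_lt_of_sq => //; nra.
Qed.
End Fin.

Theorem lemma2p7 (R : realType) (Om : set 'rV[R]_3) (n : 'rV[R]_3 -> 'rV[R]_3)
    (d : R) (m1 : nat) (x0 e1 e2 : 'I_m1 -> 'rV[R]_3)
    (phi : 'I_m1 -> R -> R -> R) :
  open Om -> connected Om -> bounded3 Om ->
  C2_boundary Om -> outward_unit_normal Om n ->
  0 < d -> d < 1 ->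
  (* d smaller than a uniform interior sphere radius d_r *)
  (exists dr : R, d < dr /\
     forall y, bdry Om y -> eball (y - dr *: n y) dr `<=` Om) ->
  (forall i, bdry Om (x0 i)) ->
  (forall y, bdry Om y -> exists i, eball (x0 i) (d / 8) y) ->
  (forall i, orthonormal3 (e1 i) (e2 i) (- n (x0 i))) ->
  (forall i, [/\ C2 (phi i), phi i 0 0 = 0, pd1 (phi i) 0 0 = 0,
                 pd2 (phi i) 0 0 = 0 &
                 forall a b, Num.sqrt (pd1 (phi i) a b ^+ 2 + pd2 (phi i) a b ^+ 2)
                             < 1 / 100]) ->
  (forall i z, eball (x0 i) (3 * d) z ->
     (bdry Om z <-> exists u1 u2,
         z = chart_pt (x0 i) (e1 i) (e2 i) (- n (x0 i)) u1 u2 (phi i u1 u2)) /\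
     (Om z <-> exists u1 u2 u3,
         z = chart_pt (x0 i) (e1 i) (e2 i) (- n (x0 i)) u1 u2 u3 /\
         phi i u1 u2 < u3)) ->
  forall vM eps : R, 0 < vM -> 0 < eps ->
  exists teps : R, 0 < teps /\
    forall tau2 : R, 0 < tau2 <= teps ->
    exists l : R, 0 < l /\
      forall (i : 'I_m1) (x v : 'rV[R]_3) (X Vs : R -> 'rV[R]_3),
        eball (x0 i) d x -> enorm v <= vM ->
        billiard Om n x v X Vs ->
        (forall s, 0 <= s <= tau2 -> layer Om l (X s) /\ eball (x0 i) d (X s)) ->
        forall s, 0 <= s <= teps -> enorm (Vs s - v) < eps.
Proof.
move=> _ _ _ _ hnor hd0 _ _ _ _ hON hphi hchart vM eps vM0 eps0.
have hC2 : forall i, C2 (phi i) by move=> i; case: (hphi i).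
have [Lg [Lg0 hLip]] := uniform_lip (3 * d) hC2.
have [K [teps [hK teps0 Kt vt]]] := consts Lg0 vM0 eps0 hd0.
exists teps; split => // tau2 /andP [tau0 taut].
have [l [l0 ll ld]] := consts2 eps0 hd0 tau0.
exists l; split => // i x v X Vs hx hv hb hlay s hs.
have [hc2 _ _ _ hgrad] := hphi i.
have [hpe _ _ _ _] := hc2.
have hpd : forall a b, `|pd1 (phi i) a b| <= 1 / 100 /\ `|pd2 (phi i) a b| <= 1 / 100.
  by move=> a b; apply: grad_bound; apply: hgrad.
exact: (chart_main hd0 (hON i) (hchart i) hpe hpd Lg0 (hLip i) hnor vM0 eps0 hK teps0 Kt vt
  tau0 taut l0 ll ld hx hv hb hlay hs).
Qed.
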